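(* Let $A, m, e$ be constants and $\Lambda$ a constant, and on a region with coordinates $(y,x,\phi)$ where $F>0$ and $G>0$ consider the Riemannian metric \[ h_\Lambda = \frac{1}{F^2}\,dy^2 + \frac{1}{GF}\,dx^2 + \frac{G}{F}\,d\phi^2, \] with \[ F = F_\Lambda(y) = y^2 - 2mAy^3 + e^2A^2y^4 - 1 - \frac{\Lambda}{3A^2},\qquad G(x) = 1 - x^2 - 2mAx^3 - e^2A^2x^4 . \] Then for any two values $\Lambda_1,\Lambda_2$ (on a common domain where the metrics are defined) the metrics $h_{\Lambda_1}$ and $h_{\Lambda_2}$ are projectively equivalent via the identity map, i.e. they have the same unparametrised geodesics. In particular, the null geodesics of the cosmological $C$-metric \[ g = \frac{1}{A^2(x^2+y^2)}\Big(-F\,dt^2 + \frac{1}{F}dy^2 + \frac{1}{G}dx^2 + G\,d\phi^2\Big) \] project to curves (the unparametrised geodesics of its optical metric $h_\Lambda$) that do not depend on $\Lambda$.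
   Context: The metric $h_\Lambda$ is the optical metric of the cosmological $C$-metric $g$ with respect to the static Killing vector $\partial/\partial t$ (i.e. $g = V^2(-dt^2 + h_\Lambda)$ with $V^2 = F/(A^2(x^2+y^2))$). Two metrics are projectively equivalent if they share the same unparametrised geodesics; equivalently their Levi-Civita connections satisfy $\tilde\Gamma^i_{jk} = \Gamma^i_{jk} + \delta^i_j\omega_k + \delta^i_k\omega_j$ for some one-form $\omega$. *)

(* Defs.v *)
(* R : realType, points of the coordinate chart are
   row vectors p : 'rV[R]_3 with p 0 0 = y, p 0 1 = x, p 0 2 = phi. *)
From HB Require Import structures.
From mathcomp Require Import all_boot all_order all_algebra.
From mathcomp Require Import all_classical all_reals all_analysis.
Set Implicit Arguments. Unset Strict Implicit. Unset Printing Implicit Defensive.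
Import Order.TTheory GRing.Theory Num.Theory.
Import numFieldNormedType.Exports.
Local Open Scope ring_scope.

Section Defs.
Variable R : realType.

Definition ycoord (p : 'rV[R]_3) : R := p 0 0.
Definition xcoord (p : 'rV[R]_3) : R := p 0 1.

Definition pderiv (f : 'rV[R]_3 -> R) (j : 'I_3) (p : 'rV[R]_3) : R :=
  'D_(delta_mx 0 j) f p.

Definition christoffel (g : 'rV[R]_3 -> 'M[R]_3) (i j k : 'I_3) (p : 'rV[R]_3) : R :=
  \sum_(l < 3) (invmx (g p)) i l *
     (pderiv (fun q => g q l k) j p + pderiv (fun q => g q l j) k p
      - pderiv (fun q => g q j k) l p) / 2.

Definition proj_equiv_on (U : set 'rV[R]_3) (g1 g2 : 'rV[R]_3 -> 'M[R]_3) : Prop :=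
  exists omega : 'rV[R]_3 -> 'rV[R]_3,
    forall p, U p -> forall i j k : 'I_3,
      christoffel g2 i j k p =
      christoffel g1 i j k p + (i == j)%:R * omega p 0 k + (i == k)%:R * omega p 0 j.

Definition FL (A m e Lam y : R) : R :=
  y ^+ 2 - 2 * m * A * y ^+ 3 + e ^+ 2 * A ^+ 2 * y ^+ 4 - 1 - Lam / (3 * A ^+ 2).
Definition GC (A m e x : R) : R :=
  1 - x ^+ 2 - 2 * m * A * x ^+ 3 - e ^+ 2 * A ^+ 2 * x ^+ 4.

Definition hLam (A m e Lam : R) (p : 'rV[R]_3) : 'M[R]_3 :=
  let F := FL A m e Lam (ycoord p) in
  let G := GC A m e (xcoord p) in
  diag_mx (\row_(i < 3) [:: 1 / F ^+ 2; 1 / (G * F); G / F]`_i).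

End Defs.

(* Main.v *)
Require Import Defs.
From HB Require Import structures.
From mathcomp Require Import all_boot all_order all_algebra.
From mathcomp Require Import all_classical all_reals all_analysis.
From mathcomp Require Import ring lra.
Import Order.TTheory GRing.Theory Num.Theory.
Import numFieldNormedType.Exports.
Local Open Scope ring_scope.

Section S.
Variable R : realType.
Set Implicit Arguments. Unset Strict Implicit.

Lemma derive_line (f : 'rV[R]_3 -> R) (p v : 'rV[R]_3) :
  'D_v f p = 'D_1 (fun h : R => f (h *: v + p)) 0.
Proof.
rewrite /derive; set g1 := fun h => h^-1 *: _; set g2 := fun h => h^-1 *: _.
suff -> : g1 = g2 by [].
by rewrite funeqE /g1 /g2 => h /=; rewrite addr0 scale0r add0r [_%:A]mulr1.
Qed.

Lemma is_derive_coord (P : {poly R}) (i j : 'I_3) (p : 'rV[R]_3) :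
  is_derive p (delta_mx 0 j) (fun q : 'rV[R]_3 => P.[q 0 i])
     ((j == i)%:R * (deriv P).[p 0 i]).
Proof.
pose Q := P \Po ('X * ((j == i)%:R)%:P + (p 0 i)%:P).
have E : (fun h : R => P.[(h *: delta_mx 0 j + p) 0 i]) = horner Q.
  apply/funext => h; rewrite /Q horner_comp !mxE !hornerE /=.
  by rewrite eq_sym.
constructor.
  by apply/derivable1P; rewrite E; exact: ex_derive.
rewrite derive_line E derive_val /Q deriv_comp derivD derivC derivM derivX derivC.
by rewrite hornerM horner_comp !hornerE mulrC.
Qed.

Lemma invmx_diag n (d e : 'rV[R]_n) : (forall j, d 0 j * e 0 j = 1) ->
  invmx (diag_mx d) = diag_mx e.
Proof.
move=> de.
have H : diag_mx d *m diag_mx e = 1%:M.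
  rewrite mulmx_diag -diag_const_mx; congr diag_mx; apply/rowP => j.
  by rewrite !mxE de.
have [U _] := mulmx1_unit H.
by rewrite -[invmx _]mulmx1 -H mulmxA mulVmx // mul1mx.
Qed.

Lemma isdV (f : 'rV[R]_3 -> R) x v df : f x != 0 -> is_derive x v f df ->
  is_derive x v (fun y => (f y)^-1) (- (f x)^-2 * df).
Proof.
move=> fx0 H; constructor; first exact: derivableV.
by rewrite deriveV // derive_val.
Qed.

Lemma isdM (f g : 'rV[R]_3 -> R) x v df dg : is_derive x v f df ->
  is_derive x v g dg -> is_derive x v (fun y => f y * g y) (f x * dg + g x * df).
Proof. move=> Hf Hg; exact: is_deriveM. Qed.

Lemma isd_eq (f g : 'rV[R]_3 -> R) x v df dg : f = g -> df = dg ->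
  is_derive x v f df -> is_derive x v g dg.
Proof. by move=> -> ->. Qed.

Lemma isd_val (f g : 'rV[R]_3 -> R) x v df : f = g ->
  is_derive x v f df -> 'D_v g x = df.
Proof. by move=> <- H; rewrite derive_val. Qed.


Definition FLpoly (A m e Lam : R) : {poly R} :=
  'X^2 - (2 * m * A)%:P * 'X^3 + (e ^+ 2 * A ^+ 2)%:P * 'X^4
  - (1 + Lam / (3 * A ^+ 2))%:P.
Definition GCpoly (A m e : R) : {poly R} :=
  1 - 'X^2 - (2 * m * A)%:P * 'X^3 - (e ^+ 2 * A ^+ 2)%:P * 'X^4.

Lemma FLE A m e Lam y : FL A m e Lam y = (FLpoly A m e Lam).[y].
Proof. rewrite /FL /FLpoly !hornerE; ring. Qed.
Lemma GCE A m e x : GC A m e x = (GCpoly A m e).[x].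
Proof. rewrite /GC /GCpoly !hornerE; ring. Qed.

Lemma FLderiv A m e L1 L2 : deriv (FLpoly A m e L1) = deriv (FLpoly A m e L2).
Proof. by rewrite /FLpoly !derivB !derivC !subr0. Qed.

Definition dv (f g : R) (i : 'I_3) : R := [:: 1 / f ^+ 2; 1 / (g * f); g / f]`_i.
Definition ddv (f fp g gp : R) (i j : 'I_3) : R :=
  let a := (j == 0)%:R * fp in let b := (j == 1)%:R * gp in
  [:: -2 / f ^+ 3 * a; - (g * a + f * b) / (g * f) ^+ 2; b / f - g * a / f ^+ 2]`_i.

Lemma pd_dv A m e Lam (p : 'rV[R]_3) (l j : 'I_3) :
  let f := FL A m e Lam (ycoord p) in let g := GC A m e (xcoord p) in
  f != 0 -> g != 0 ->
  pderiv (fun q => dv (FL A m e Lam (ycoord q)) (GC A m e (xcoord q)) l) j p =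
  ddv f (deriv (FLpoly A m e Lam)).[ycoord p] g (deriv (GCpoly A m e)).[xcoord p] l j.
Proof.
move=> f g f0 g0.
have HF : is_derive p (delta_mx 0 j) (fun q => FL A m e Lam (ycoord q))
   ((j == 0)%:R * (deriv (FLpoly A m e Lam)).[ycoord p]).
  apply: isd_eq (is_derive_coord _ 0 j p) => //.
  by apply/funext => q; rewrite FLE.
have HG : is_derive p (delta_mx 0 j) (fun q => GC A m e (xcoord q))
   ((j == 1)%:R * (deriv (GCpoly A m e)).[xcoord p]).
  apply: isd_eq (is_derive_coord _ 1 j p) => //.
  by apply/funext => q; rewrite GCE.
have H1 := is_derive_cst (1 : R) p (delta_mx 0 j).
rewrite /pderiv.
case: l => [[|[|[|//]]] ?] /=.
- rewrite (isd_val _ (isdM H1 (isdV (mulf_neq0 f0 f0) (isdM HF HF)))).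
    rewrite /ddv /= -/f; clearbody f. move: (j == 0)%:R => a. by field.
  by apply: boolp.funext => q; rewrite /dv /= expr2.
- rewrite (isd_val _ (isdM H1 (isdV (mulf_neq0 g0 f0) (isdM HG HF)))).
    rewrite /ddv /= -/f -/g; clearbody f g; move: (j == 0)%:R (j == 1)%:R => a b.
    by move: (_.[ycoord p]) (_.[xcoord p]) => c d; field; rewrite ?f0 ?g0.
  by apply: boolp.funext => q; rewrite /dv /=.
- rewrite (isd_val _ (isdM HG (isdV f0 HF))).
    rewrite /ddv /= -/f -/g; clearbody f g; move: (j == 0)%:R (j == 1)%:R => a b.
    by move: (_.[ycoord p]) (_.[xcoord p]) => c d; field; rewrite ?f0 ?g0.
  by apply: boolp.funext => q; rewrite /dv /=.
Qed.

Lemma hLamE A m e Lam q (l k : 'I_3) :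
  hLam A m e Lam q l k = dv (FL A m e Lam (ycoord q)) (GC A m e (xcoord q)) l *+ (l == k).
Proof. by rewrite /hLam /dv !mxE. Qed.

Lemma pd_hLam A m e Lam (p : 'rV[R]_3) (l k j : 'I_3) :
  let f := FL A m e Lam (ycoord p) in let g := GC A m e (xcoord p) in
  f != 0 -> g != 0 ->
  pderiv (fun q => hLam A m e Lam q l k) j p =
  (l == k)%:R * ddv f (deriv (FLpoly A m e Lam)).[ycoord p] g (deriv (GCpoly A m e)).[xcoord p] l j.
Proof.
move=> f g f0 g0.
have -> : (fun q => hLam A m e Lam q l k) =
   (fun q => dv (FL A m e Lam (ycoord q)) (GC A m e (xcoord q)) l *+ (l == k)).
  by apply: boolp.funext => q; rewrite hLamE.
case: (l == k).
  by rewrite mul1r -pd_dv.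
by rewrite mul0r /pderiv; exact: derive_cst.
Qed.

Lemma inv_hLam A m e Lam (p : 'rV[R]_3) (i l : 'I_3) :
  let f := FL A m e Lam (ycoord p) in let g := GC A m e (xcoord p) in
  f != 0 -> g != 0 ->
  invmx (hLam A m e Lam p) i l = (i == l)%:R / dv f g i.
Proof.
move=> f g f0 g0.
rewrite /hLam (@invmx_diag _ _ (\row_i (dv f g i)^-1)).
  by rewrite !mxE mulr_natl.
move=> j; rewrite !mxE -/f -/g; apply: mulfV.
by case: j => [[|[|[|//]]] ?]; rewrite /dv /= ?mulf_neq0 ?invr_neq0 ?expf_neq0 ?mulf_neq0 ?oner_neq0.
Qed.

Definition CH f fp g gp (i j k : 'I_3) : R :=
  \sum_(l < 3) (i == l)%:R / dv f g i *
    ((l == k)%:R * ddv f fp g gp l j + (l == j)%:R * ddv f fp g gp l k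
     - (j == k)%:R * ddv f fp g gp j l) / 2.

Lemma chE A m e Lam (p : 'rV[R]_3) (i j k : 'I_3) :
  let f := FL A m e Lam (ycoord p) in let g := GC A m e (xcoord p) in
  f != 0 -> g != 0 ->
  christoffel (hLam A m e Lam) i j k p =
  CH f (deriv (FLpoly A m e Lam)).[ycoord p] g (deriv (GCpoly A m e)).[xcoord p] i j k.
Proof.
move=> f g f0 g0; rewrite /christoffel /CH; apply: eq_bigr => l _.
by rewrite inv_hLam // !pd_hLam.
Qed.

End S.

Lemma CH_proj (R : realType) (f1 f2 fp g gp : R) (i j k : 'I_3) :
  f1 != 0 -> f2 != 0 -> g != 0 ->
  CH f2 fp g gp i j k = CH f1 fp g gp i j k
   + (i == j)%:R * ((k == 0)%:R * fp / 2 * (1 / f1 - 1 / f2))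
   + (i == k)%:R * ((j == 0)%:R * fp / 2 * (1 / f1 - 1 / f2)).
Proof.
move=> h1 h2 h3.
rewrite /CH !big_ord_recr !big_ord0 /=.
case: i => [[|[|[|//]]] ?]; case: j => [[|[|[|//]]] ?]; case: k => [[|[|[|//]]] ?];
  by rewrite /dv /ddv /=; field; rewrite ?h1 ?h2 ?h3.
Qed.

Theorem mainTheorem6 (R : realType) (A m e Lam1 Lam2 : R) :
  proj_equiv_on
    [set p : 'rV[R]_3 | 0 < FL A m e Lam1 (ycoord p) /\ 0 < FL A m e Lam2 (ycoord p)
                        /\ 0 < GC A m e (xcoord p)]
    (hLam A m e Lam1) (hLam A m e Lam2).
Proof.
exists (fun p => \row_(k < 3) ((k == 0)%:R * (deriv (FLpoly A m e Lam1)).[ycoord p] / 2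
   * (1 / FL A m e Lam1 (ycoord p) - 1 / FL A m e Lam2 (ycoord p)))).
move=> p [h1 [h2 h3]] i j k.
have n1 := lt0r_neq0 h1; have n2 := lt0r_neq0 h2; have n3 := lt0r_neq0 h3.
rewrite (chE _ _ _ n2 n3) (chE _ _ _ n1 n3) !mxE (FLderiv A m e Lam2 Lam1).
exact: CH_proj.
Qed.
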